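(* Let $n,d$ be positive integers and let $k$ be a positive integer. Then $v_A(n,d,k)\ge v_M(n,d,k)$, where $v_A$ is the value of Alpern's caching game and $v_M$ is the value of the multiple-treasures-per-door search game.
   Context: Multiple-treasures-per-door search game with parameters $(n,d,k)$: the hider places $d$ treasures behind $n$ doors, several treasures allowed behind the same door. In each round the searcher selects at most $k$ doors; if none of them hides a treasure not yet found, she loses; otherwise the hider reveals one not-yet-found treasure behind one of the selected doors (hider's choice). The searcher wins if she finds all $d$ treasures with a total of $d$ guesses. Players may randomize and the searcher may adapt to previous answers; $v_M(n,d,k)$ is the probability the searcher wins under optimal play by both. Alpern's caching game with parameters $(n,d,k)$: there are $n$ places. The hider digs holes at the places with nonnegative depths $h_1,\dots,h_n$ of total depth $\sum_i h_i\le 1$, and hides the $d$ treasures in these holes, each treasure at some place $i$ and some depth $t\in[0,h_i]$ (several treasures may be in the same hole). Afterwards the searcher digs adaptively: at each place she digs downward from the surface, and she may dig a total depth (summed over all places) of at most $k$; she finds a treasure at place $i$ and depth $t$ at the moment her digging at place $i$ reaches depth $t$, and she observes when she finds a treasure. She wins if she finds all $d$ treasures. Players may randomize; $v_A(n,d,k)$ is the probability the searcher wins under optimal play by both. *)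

(* Defs.v *)
From HB Require Import structures.
From mathcomp Require Import all_boot all_order all_algebra.
From mathcomp Require Import boolp classical_sets reals.
Set Implicit Arguments. Unset Strict Implicit. Unset Printing Implicit Defensive.
Import Order.TTheory GRing.Theory Num.Theory.
Local Open Scope ring_scope.
Local Open Scope classical_set_scope.

Section Mixed.
Variable (R : realType).
(* A (finitely supported) mixed strategy over pure strategies of type T:
   a list of (probability weight, pure strategy); all weights >= 0, all
   strategies admissible, total weight 1. *)
Definition mix_ok (T : Type) (ok : T -> Prop) (mu : seq (R * T)) : Prop :=
  foldr (fun p P => (0 <= p.1 /\ ok p.2) /\ P) True mu /\
  \sum_(p <- mu) p.1 = 1.
End Mixed.

Section MGame.
Variables (R : realType) (n d k : nat).

(* searcher pure strategy: history of revealed doors -> selected doors *)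
Definition mstrat := seq 'I_n -> {set 'I_n}.
Definition mstrat_ok (s : mstrat) : Prop := forall hist, (#|s hist| <= k)%N.

(* hider pure strategy: a placement (number of treasures behind each door)
   together with a response rule (which not-yet-found treasure to reveal) *)
Definition mplacement := 'I_n -> nat.
Definition mresp := seq 'I_n -> {set 'I_n} -> 'I_n.

(* door j still hides a not-yet-found treasure after history hist *)
Definition m_avail (c : mplacement) (hist : seq 'I_n) (j : 'I_n) : bool :=
  (count_mem j hist < c j)%N.

Definition mhider_ok (c : mplacement) (r : mresp) : Prop :=
  (\sum_(i < n) c i)%N = d /\
  forall hist (S : {set 'I_n}), [exists j in S, m_avail c hist j] ->
    (r hist S \in S) && m_avail c hist (r hist S).

(* history after m rounds, or None if the searcher has lost *)
Fixpoint mplay (s : mstrat) (c : mplacement) (r : mresp) (m : nat)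
  : option (seq 'I_n) :=
  match m with
  | 0 => Some [::]
  | m'.+1 =>
    match mplay s c r m' with
    | None => None
    | Some hist =>
      if [exists j in s hist, m_avail c hist j]
      then Some (rcons hist (r hist (s hist))) else None
    end
  end.

Definition mwins (s : mstrat) (c : mplacement) (r : mresp) : bool :=
  mplay s c r d != None.

Definition mwinprob (mu : seq (R * mstrat)) c r : R :=
  \sum_(p <- mu) p.1 * (mwins p.2 c r)%:R.

Definition v_M : R :=
  sup [set v : R | exists mu, mix_ok (@mstrat_ok) mu /\
        v = inf [set w : R | exists c r, mhider_ok c r /\ w = mwinprob mu c r]].
End MGame.

Section AGame.
Variables (R : realType) (n d k : nat).

(* treasure configuration: treasure j is at place (x j).1, depth (x j).2 *)
Definition acfg := ('I_d -> 'I_n * R)%type.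

(* hider pure strategy: hole depths h and treasure positions x *)
Definition ahider_ok (h : 'I_n -> R) (x : acfg) : Prop :=
  (forall i, 0 <= h i) /\ \sum_(i < n) h i <= 1 /\
  forall j, 0 <= (x j).2 <= h (x j).1.

(* searcher pure strategy: for each configuration x, a digging path
   s |-> (depth dug at each place when total depth s has been dug),
   s in [0,k]; it must be non-anticipative (depend only on what has been
   observed so far). *)
Definition astrat := acfg -> R -> 'I_n -> R.

Definition aobs (D : astrat) (x : acfg) (s : R) (i : 'I_n) : nat :=
  #|[set j : 'I_d | ((x j).1 == i) && ((x j).2 <= D x s i)]|.

Definition astrat_ok (D : astrat) : Prop :=
  (forall x i, D x 0 i = 0) /\
  (forall x i s s', 0 <= s -> s <= s' -> s' <= k%:R -> D x s i <= D x s' i) /\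
  (forall x s, 0 <= s <= k%:R -> \sum_(i < n) D x s i = s) /\
  (forall x y s, 0 <= s <= k%:R ->
     (forall s', 0 <= s' <= s -> aobs D x s' = aobs D y s') ->
     forall s', 0 <= s' <= s -> D x s' = D y s').

Definition awins (D : astrat) (x : acfg) : bool :=
  [forall j, (x j).2 <= D x k%:R (x j).1].

Definition awinprob (mu : seq (R * astrat)) x : R :=
  \sum_(p <- mu) p.1 * (awins p.2 x)%:R.

Definition v_A : R :=
  sup [set v : R | exists mu, mix_ok astrat_ok mu /\
        v = inf [set w : R | exists h x, ahider_ok h x /\ w = awinprob mu x]].
End AGame.

(* Main.v *)
Require Import Defs.
From mathcomp Require Import all_boot all_order all_algebra.
From mathcomp Require Import boolp classical_sets reals.
From mathcomp Require Import lra.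
Set Implicit Arguments. Unset Strict Implicit. Unset Printing Implicit Defensive.
Import Order.TTheory GRing.Theory Num.Theory.
Local Open Scope ring_scope.

Section IVT.
Variable R : realType.
Local Open Scope classical_set_scope.

Lemma ivt_lip (F : R -> R) (K M t : R) : 0 <= K -> 0 <= M ->
  (forall a b, 0 <= a -> a <= b -> F a <= F b) ->
  (forall a b, 0 <= a -> a <= b -> F b <= F a + K * (b - a)) ->
  F 0 <= t -> t <= F M -> exists l, 0 <= l /\ F l = t.
Proof.
move=> K0 M0 Fm Fl F0t tFM.
pose E := [set l : R | 0 <= l /\ l <= M /\ F l <= t].
have E0 : E 0 by rewrite /E /=; split; [exact: lexx | split].
have Eub : ubound E M by move=> y [_ []].
have hs : has_ubound E by exists M.
have hsup : has_sup E by split; [exists 0 | ].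
have l0 : 0 <= sup E by apply: (ub_le_sup hs).
have lM : sup E <= M by apply: ge_sup => //; exists 0.
exists (sup E); split => //.
have K1 : 0 < K + 1 by lra.
apply/eqP; rewrite eq_le; apply/andP; split.
  rewrite leNgt; apply/negP => Hlt.
  pose eps := (F (sup E) - t) / (K + 1).
  have Heps : eps * (K + 1) = F (sup E) - t by rewrite /eps divfK // gt_eqF.
  have ep0 : 0 < eps by rewrite /eps divr_gt0 // subr_gt0.
  have [e [e0 [eM Fe]] He] := sup_adherent ep0 hsup.
  have el : e <= sup E by apply: (ub_le_sup hs).
  have := Fl e (sup E) e0 el.
  have : K * (sup E - e) <= K * eps by apply: ler_wpM2l => //; lra.
  lra.
rewrite leNgt; apply/negP => Hlt.
have lM' : sup E < M.
  rewrite lt_neqAle lM andbT; apply/negP => /eqP E1.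
  by move: Hlt; rewrite E1 => H; have := lt_le_trans H tFM; rewrite ltxx.
pose del := (t - F (sup E)) / (K + 1).
have Hdel : del * (K + 1) = t - F (sup E) by rewrite /del divfK // gt_eqF.
have de0 : 0 < del by rewrite /del divr_gt0 // subr_gt0.
pose e := if sup E + del <= M then sup E + del else M.
have e1 : sup E < e by rewrite /e; case: ifP => _; lra.
have e2 : e <= M by rewrite /e; case: ifP => [//|/negbT]; rewrite -ltNge => ?; lra.
have e3 : e - sup E <= del by rewrite /e; case: ifP => [_|/negbT]; [lra | rewrite -ltNge => ?; lra].
have : E e.
  split; first lra. split => //.
  have := Fl (sup E) e l0 (ltW e1).
  have : K * (e - sup E) <= K * del by apply: ler_wpM2l.
  lra.
move/(ub_le_sup hs); lra.
Qed.
End IVT.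

Section Gen.
Variable R : realType.

Definition let_ (t : R) : pred R := fun y => y <= t.
Definition mx (a b : R) := if a <= b then b else a.

Lemma mx_ge_l a b : a <= mx a b.
Proof. by rewrite /mx; case: ifP => // _; rewrite lexx. Qed.
Lemma mx_ge_r a b : b <= mx a b.
Proof. rewrite /mx; case: ifP => [_|/negbT]; first by rewrite lexx.
by rewrite -ltNge => /ltW. Qed.
Lemma mx_le a b c : a <= c -> b <= c -> mx a b <= c.
Proof. by rewrite /mx; case: ifP. Qed.
Lemma mx_r a b : a <= b -> mx a b = b.
Proof. by rewrite /mx => ->. Qed.

Lemma sorted_count (sq : seq R) m (t : R) : sorted <=%R sq ->
  (m < count (let_ t) sq)%N = (m < size sq)%N && (nth 0 sq m <= t).
Proof.
elim: sq m => [|a sq IH] m //= Hs.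
have Hs' : sorted <=%R sq by apply: (path_sorted Hs).
have Hall : all (fun y => a <= y) sq by apply: (order_path_min (@le_trans _ _) Hs).
case: (boolP (a <= t)) => Hat.
  have -> : let_ t a = true by []. case: m => [|m] /=; first by rewrite Hat.
  by rewrite add1n ltnS IH.
have H0 : count (let_ t) sq = 0%N.
  apply/eqP; rewrite -leqn0 leqNgt -has_count; apply/hasPn => y Hy.
  move/allP: Hall => /(_ y Hy) Hay; apply/negP => Hyt.
  by move/negP: Hat; apply; apply: le_trans Hyt.
have -> : let_ t a = false by apply/negbTE. rewrite H0 /=; case: m => [|m] /=; first by rewrite (negbTE Hat).
case Hm: (m < size sq)%N => //=; apply/esym/negbTE/negP => Hnt.
move/allP: Hall => /(_ (nth 0 sq m) (mem_nth 0 Hm)) Hay.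
case/andP: Hnt => _ Hnt; by move/negP: Hat; apply; exact: (le_trans Hay Hnt).
by case/andP: Hnt; rewrite ltnS Hm.
Qed.

End Gen.

Section Strat.
Variables (R : realType) (n d : nat) (i0 : 'I_n) (s : mstrat n).
Implicit Types (x : acfg R n d) (h : seq 'I_n) (S : {set 'I_n}).

Definition cl (t : R) : R := if 0 <= t then t else 0.
Definition depl x (j : 'I_n) : seq R :=
  [seq cl (x i).2 | i <- [seq i <- enum 'I_d | (x i).1 == j]].
Definition sdep x j := sort <=%R (depl x j).
Definition cx x : mplacement n := fun j => size (depl x j).
Definition pos x j m := nth 0 (sdep x j) m.
Definition prv x j m := if m is m'.+1 then pos x j m' else 0.
Definition gap x h j := pos x j (count_mem j h) - prv x j (count_mem j h).
Definition av x h j := m_avail (cx x) h j.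
Definition Mset x h (S : {set 'I_n}) :=
  [set j in S | av x h j && [forall i in S, av x h i ==> (gap x h j <= gap x h i)]].
Definition rx x : mresp n := fun h S => odflt i0 [pick j in Mset x h S].

Lemma cl_ge0 t : 0 <= cl t.
Proof. by rewrite /cl; case: ifP. Qed.
Lemma cl_le t u : 0 <= u -> (cl t <= u) = (t <= u).
Proof.
move=> u0; rewrite /cl; case: ifP => // /negbT; rewrite -ltNge => t0.
by rewrite u0; apply/esym; apply: ltW; apply: lt_le_trans t0 u0.
Qed.
Lemma ge_cl t : t <= cl t.
Proof. rewrite /cl; case: ifP => [_|/negbT]; first by rewrite lexx. by rewrite -ltNge => /ltW. Qed.

Lemma sdep_sorted x j : sorted <=%R (sdep x j).
Proof. by apply: sort_sorted; exact: le_total. Qed.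
Lemma size_sdep x j : size (sdep x j) = cx x j.
Proof. by rewrite size_sort. Qed.

Lemma cnt_pos x j m t :
  (m < count (let_ t) (sdep x j))%N = (m < cx x j)%N && (pos x j m <= t).
Proof. by rewrite sorted_count ?sdep_sorted // size_sdep. Qed.

Lemma count_sdep x j t : 0 <= t ->
  count (let_ t) (sdep x j) = #|[set i | ((x i).1 == j) && ((x i).2 <= t)]|.
Proof.
move=> t0.
have -> : count (let_ t) (sdep x j) = count (let_ t) (depl x j).
  by apply/permP; rewrite perm_sort.
rewrite /depl count_map count_filter cardsE cardE /enum_mem size_filter.
rewrite (eq_filter (a2 := predT)) // filter_predT.
apply: eq_count => i /=; rewrite /let_ /= cl_le // andbC. by [].
Qed.

Lemma cx_card x j : cx x j = #|[set i | (x i).1 == j]|.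
Proof. rewrite /cx /depl size_map size_filter cardsE cardE /enum_mem size_filter.
rewrite (eq_filter (a2 := predT)) // filter_predT -size_filter. by []. Qed.

Lemma pos_ge0 x j m : 0 <= pos x j m.
Proof.
rewrite /pos; case: (ltnP m (size (sdep x j))) => Hm; last by rewrite nth_default.
have : nth 0 (sdep x j) m \in depl x j by rewrite -(mem_sort <=%R) mem_nth.
by case/mapP => i _ ->; apply: cl_ge0.
Qed.

Lemma pos_mono x j m : (m.+1 < cx x j)%N -> pos x j m <= pos x j m.+1.
Proof.
move=> Hm.
have : (m.+1 < count (let_ (pos x j m.+1)) (sdep x j))%N by rewrite cnt_pos Hm lexx.
move=> H; have : (m < count (let_ (pos x j m.+1)) (sdep x j))%N by apply: ltn_trans H.
by rewrite cnt_pos => /andP [].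
Qed.

Lemma prv_ge0 x j m : 0 <= prv x j m.
Proof. by case: m => [|m] //=; apply: pos_ge0. Qed.

Lemma prv_le_pos x j m : (m < cx x j)%N -> prv x j m <= pos x j m.
Proof. by case: m => [|m] /= H; [apply: pos_ge0 | apply: pos_mono]. Qed.

Lemma gap_ge0 x h j : av x h j -> 0 <= gap x h j.
Proof. by move=> H; rewrite /gap subr_ge0; apply: prv_le_pos. Qed.

Lemma sum_cx x : (\sum_(j < n) cx x j)%N = d.
Proof.
under eq_bigr => j _ do rewrite cx_card cardsE.
rewrite -[RHS]card_ord -sum1_card (partition_big (fun i => (x i).1) predT) //=.
by apply: eq_bigr => j _; rewrite sum1_card.
Qed.

Lemma inMset x h S j : (j \in Mset x h S) =
  [&& j \in S, av x h j & [forall i in S, av x h i ==> (gap x h j <= gap x h i)]].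
Proof. by rewrite inE. Qed.

Lemma rx_in x h S : [exists j in S, av x h j] -> rx x h S \in Mset x h S.
Proof.
case/existsP => j0 /andP [Hj0S Hj0].
pose P := [pred j | (j \in S) && av x h j].
have HP : P j0 by rewrite /P /= Hj0S.
case: (@arg_minP _ _ _ j0 P (gap x h) HP) => i /andP [HiS Hi] Hmin.
rewrite /rx; case: pickP => [j -> //|H].
move: (H i); rewrite inMset HiS Hi /= => /negbT /negP; case.
apply/forallP => k; apply/implyP => HkS; apply/implyP => Hk.
by apply: Hmin; rewrite /P /= HkS.
Qed.

Lemma rx_hider x : mhider_ok d (cx x) (rx x).
Proof.
split; first exact: sum_cx.
move=> h S /rx_in; rewrite inMset => /and3P [H1 H2 _].
by rewrite H1.
Qed.


Definition state := (seq 'I_n * ('I_n -> R))%type.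
Implicit Types (st : state).

Definition raise x st (L : R) : 'I_n -> R := fun i =>
  if s st.1 == finset.set0 then st.2 i + (if i == i0 then L else 0)
  else if i \in s st.1 then mx (st.2 i) (prv x i (count_mem i st.1) + L)
  else st.2 i.
Definition gl x st : option R :=
  if [exists j in s st.1, av x st.1 j]
  then Some (gap x st.1 (rx x st.1 (s st.1))) else None.
Definition nxt x st (g : R) : state :=
  (rcons st.1 (rx x st.1 (s st.1)), raise x st g).
Fixpoint prof x (f : nat) st (l : R) : 'I_n -> R :=
  match f with
  | 0 => raise x st l
  | f'.+1 => match gl x st with
     | Some g => if l < g then raise x st l else prof x f' (nxt x st g) (l - g)
     | None => raise x st l end end.
Definition Inv x st :=
  (forall i, prv x i (count_mem i st.1) <= st.2 i) /\
  (forall i, av x st.1 i -> st.2 i <= pos x i (count_mem i st.1)).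

Lemma raise_mono x st L1 L2 i : 0 <= L1 -> L1 <= L2 ->
  raise x st L1 i <= raise x st L2 i /\ raise x st L2 i <= raise x st L1 i + (L2 - L1).
Proof.
move=> H1 H2; rewrite /raise; case: ifP => _.
  by case: ifP => _; split; lra.
case: ifP => _; last by split; lra.
set c := st.2 i; set p := prv x i _.
split.
  by apply: mx_le; [apply: mx_ge_l | apply: le_trans (mx_ge_r _ _); lra].
apply: mx_le.
  by have := mx_ge_l c (p + L1); lra.
by have := mx_ge_r c (p + L1); lra.
Qed.

Lemma raise_ge x st L i : 0 <= L -> st.2 i <= raise x st L i.
Proof.
move=> H; rewrite /raise; case: ifP => _.
  by case: ifP => _; lra.
by case: ifP => _; [apply: mx_ge_l | lra].
Qed.

Lemma raise0 x st : Inv x st -> raise x st 0 = st.2.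
Proof.
case=> I1 _; apply/funext => i; rewrite /raise; case: ifP => _.
  by case: ifP => _; rewrite addr0.
by case: ifP => // _; rewrite addr0 /mx; case: ifP => // H; apply/eqP; rewrite eq_le H I1.
Qed.

Lemma gl_some x st g : gl x st = Some g ->
  [/\ rx x st.1 (s st.1) \in Mset x st.1 (s st.1), s st.1 != finset.set0 &
      g = gap x st.1 (rx x st.1 (s st.1))].
Proof.
rewrite /gl; case: ifP => // Hex [<-]; have Hin := rx_in Hex.
split => //; apply/set0Pn; exists (rx x st.1 (s st.1)).
by move: Hin; rewrite inMset => /and3P [].
Qed.

Lemma gl_ge0 x st g : gl x st = Some g -> 0 <= g.
Proof.
by case/gl_some => + _ -> => /[!inMset] /and3P [_ Ha _]; apply: gap_ge0.
Qed.

Lemma cnt_rcons (h : seq 'I_n) j i : count_mem i (rcons h j) = (count_mem i h + (j == i))%N.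
Proof. by rewrite -cats1 count_cat /= addn0. Qed.

Lemma Inv_nxt x st g : Inv x st -> gl x st = Some g -> Inv x (nxt x st g).
Proof.
case=> I1 I2 /gl_some [Hin HS Hg].
move: Hin; rewrite inMset => /and3P [HjS Hja /forallP Hmin].
set j := rx x st.1 (s st.1) in HjS Hja Hmin Hg.
have g0 : 0 <= g by rewrite Hg; apply: gap_ge0.
rewrite /nxt /Inv /=; split => i; rewrite cnt_rcons /=.
  case: (eqVneq j i) => [<-|Hji] /=.
    rewrite addn1 /= /raise (negbTE HS) HjS; apply: le_trans (mx_ge_r _ _).
    by rewrite Hg /gap; lra.
  rewrite addn0; apply: le_trans (I1 i) _; exact: raise_ge.
case: (eqVneq j i) => [<-|Hji] /=.
  rewrite /av /m_avail cnt_rcons eqxx addn1 => Ha.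
  rewrite /raise (negbTE HS) HjS; apply: mx_le.
    by apply: le_trans (I2 _ Hja) _; apply: pos_mono.
  by rewrite Hg /gap subrKC; apply: pos_mono.
rewrite /av /m_avail ?cnt_rcons (negbTE Hji) ?addn0 => Ha.
rewrite ?addn0 /raise (negbTE HS); case: ifP => HiS; last exact: I2.
apply: mx_le; first exact: I2.
have := implyP (implyP (Hmin i) HiS) Ha; rewrite -Hg /gap; lra.
Qed.

Lemma prof_0 x f st : Inv x st -> prof x f st 0 = st.2.
Proof.
elim: f st => [|f IH] st HI /=; first exact: raise0.
case Hg: (gl x st) => [g|]; last exact: raise0.
case: ifP => Hlt; first exact: raise0.
have g0 := gl_ge0 Hg.
have g00 : g = 0 by move/negbT: Hlt; rewrite -leNgt => ?; lra.
rewrite g00 subrr in Hg *; rewrite IH; last exact: Inv_nxt.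
by rewrite /= raise0.
Qed.

Lemma prof_mono x f st l1 l2 i : Inv x st -> 0 <= l1 -> l1 <= l2 ->
  prof x f st l1 i <= prof x f st l2 i /\ prof x f st l2 i <= prof x f st l1 i + (l2 - l1).
Proof.
elim: f st l1 l2 => [|f IH] st l1 l2 HI H1 H2 /=.
  exact: (raise_mono x st i H1 H2).
case Hg: (gl x st) => [g|]; last exact: (raise_mono x st i H1 H2).
have g0 := gl_ge0 Hg; have HI' := Inv_nxt HI Hg.
case: ifP => Hl1; case: ifP => Hl2.
- exact: (raise_mono x st i H1 H2).
- move/negbT: Hl2; rewrite -leNgt => Hl2.
  have [A1 A2] := raise_mono x st i H1 (ltW Hl1).
  have [B1 B2] := IH (nxt x st g) 0 (l2 - g) HI' (lexx 0) (ltac:(lra)).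
  move: B1 B2; rewrite prof_0 //= => B1 B2; split; lra.
- by move/negbT: Hl1; rewrite -leNgt => Hl1; have := lt_le_trans Hl2 (le_trans Hl1 H2); rewrite ltxx.
- move/negbT: Hl1; rewrite -leNgt => Hl1.
  have [B1 B2] := IH (nxt x st g) (l1 - g) (l2 - g) HI' (ltac:(lra)) (ltac:(lra)).
  split; first by []. by have -> : l2 - l1 = (l2 - g) - (l1 - g) by lra.
Qed.

Definition cagree a b (Q : 'I_n -> R) :=
  forall i, count (let_ (Q i)) (sdep a i) = count (let_ (Q i)) (sdep b i).
Definition prevEq a b st :=
  forall i, prv a i (count_mem i st.1) = prv b i (count_mem i st.1).

Lemma raise_eq a b st L : prevEq a b st -> raise a st L = raise b st L.
Proof. by move=> HP; apply/funext => i; rewrite /raise HP. Qed.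

Lemma Mset_gap x h S j k : j \in Mset x h S -> k \in Mset x h S ->
  gap x h j = gap x h k.
Proof.
rewrite !inMset => /and3P [Hj Hja /forallP Hjm] /and3P [Hk Hka /forallP Hkm].
apply/eqP; rewrite eq_le.
by rewrite (implyP (implyP (Hjm k) Hk) Hka) (implyP (implyP (Hkm j) Hj) Hja).
Qed.

Lemma core_one a b st e j : Inv b st -> prevEq a b st -> gl b st = Some e ->
  j \in Mset b st.1 (s st.1) -> cagree a b (raise b st e) ->
  av a st.1 j /\ gap a st.1 j <= e.
Proof.
move=> [_ I2] HP Hgb Hj Hc; have [Hr HS He] := gl_some Hgb.
have Hge : gap b st.1 j = e by rewrite He; exact: (Mset_gap Hj Hr).
move: (Hj); rewrite inMset => /and3P [HjS Hja _].
have HQ : raise b st e j = pos b j (count_mem j st.1).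
  rewrite /raise (negbTE HS) HjS mx_r; first by rewrite -Hge /gap; lra.
  by have := I2 j Hja; rewrite -Hge /gap; lra.
have := Hc j; rewrite HQ => Hc'.
have : (count_mem j st.1 < count (let_ (pos b j (count_mem j st.1))) (sdep b j))%N.
  by rewrite cnt_pos lexx andbT.
rewrite -Hc' cnt_pos => /andP [Ha Hp]; split => //.
by move: Hp; rewrite /gap HP -Hge /gap; lra.
Qed.

Lemma core a b st e : Inv a st -> Inv b st -> prevEq a b st -> gl b st = Some e ->
  (forall ea, gl a st = Some ea -> e <= ea) -> cagree a b (raise b st e) ->
  [/\ gl a st = Some e, rx a st.1 (s st.1) = rx b st.1 (s st.1) &
      pos a (rx b st.1 (s st.1)) (count_mem (rx b st.1 (s st.1)) st.1) =
      pos b (rx b st.1 (s st.1)) (count_mem (rx b st.1 (s st.1)) st.1)].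
Proof.
move=> Ia Ib HP Hb Hmin Hc.
have [Hrb HS He] := gl_some Hb.
have [Hava Hgapa] := core_one Ib HP Hb Hrb Hc.
have Hexa : [exists j in s st.1, av a st.1 j].
  by apply/existsP; exists (rx b st.1 (s st.1)); move: Hrb; rewrite inMset => /and3P [-> _ _].
have Hra := rx_in Hexa.
have Hga : gl a st = Some (gap a st.1 (rx a st.1 (s st.1))) by rewrite /gl Hexa.
have Hea : gap a st.1 (rx a st.1 (s st.1)) = e.
  apply/eqP; rewrite eq_le (Hmin _ Hga) andbT.
  apply: le_trans Hgapa; move: Hra; rewrite inMset => /and3P [_ _ /forallP Hm].
  apply: (implyP (implyP (Hm _) _) Hava).
  by move: Hrb; rewrite inMset => /and3P [].
have Hsym : prevEq b a st by move=> i; rewrite HP.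
have Hc' : cagree b a (raise a st e) by rewrite (raise_eq _ HP) => i; rewrite Hc.
have Hga' : gl a st = Some e by rewrite Hga Hea.
have HM : Mset a st.1 (s st.1) = Mset b st.1 (s st.1).
  apply/setP => j; apply/idP/idP => Hj.
    have [Hjb Hgb] := core_one Ia Hsym Hga' Hj Hc'.
    move: Hj; rewrite !inMset => /and3P [-> _ _] /=; rewrite Hjb /=.
    apply/forallP => i; apply/implyP => HiS; apply/implyP => Hai.
    apply: le_trans Hgb _; rewrite He.
    move: Hrb; rewrite inMset => /and3P [_ _ /forallP Hm].
    exact: (implyP (implyP (Hm _) HiS) Hai).
  have [Hja Hgj] := core_one Ib HP Hb Hj Hc.
  move: Hj; rewrite !inMset => /and3P [-> _ _] /=; rewrite Hja /=.
  apply/forallP => i; apply/implyP => HiS; apply/implyP => Hai.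
  apply: le_trans Hgj _; rewrite -Hea.
  move: Hra; rewrite inMset => /and3P [_ _ /forallP Hm].
  exact: (implyP (implyP (Hm _) HiS) Hai).
have Hrr : rx a st.1 (s st.1) = rx b st.1 (s st.1) by rewrite /rx HM.
split => //.
move: Hea He; rewrite Hrr /gap HP => ? ?; lra.
Qed.

Lemma prof_S_ge x f st g l : gl x st = Some g -> g <= l ->
  prof x f.+1 st l = prof x f (nxt x st g) (l - g).
Proof. by move=> /= -> H; rewrite ltNge H. Qed.

Lemma prof_end x f st l : Inv x st -> 0 <= l ->
  (forall g, gl x st = Some g -> l <= g) -> prof x f.+1 st l = raise x st l.
Proof.
move=> HI l0 Hl /=; case Hg: (gl x st) => [g|] //.
case: ifP => // /negbT; rewrite -leNgt => Hgl.
have E : l = g by apply/eqP; rewrite eq_le Hgl Hl.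
by rewrite -E subrr prof_0 //; rewrite E; apply: Inv_nxt.
Qed.

Lemma NA_gen a b (B : R) f st : Inv a st -> Inv b st -> prevEq a b st ->
  (forall Q : 'I_n -> R, \sum_i Q i <= B ->
     (exists mu, 0 <= mu /\ prof a f st mu = Q /\ prof b f st mu = Q) -> cagree a b Q) ->
  forall l, 0 <= l -> \sum_i prof a f st l i <= B -> prof a f st l = prof b f st l.
Proof.
elim: f st => [|f IH] st Ia Ib HP HQ l l0 HB; first exact: raise_eq.
have fin : forall e, gl a st = Some e -> gl b st = Some e ->
    rx a st.1 (s st.1) = rx b st.1 (s st.1) ->
    pos a (rx b st.1 (s st.1)) (count_mem (rx b st.1 (s st.1)) st.1) =
    pos b (rx b st.1 (s st.1)) (count_mem (rx b st.1 (s st.1)) st.1) ->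
    e <= l -> prof a f.+1 st l = prof b f.+1 st l.
  move=> e Ha Hb Hr Hp el.
  rewrite (@prof_S_ge a f st e l Ha el) (@prof_S_ge b f st e l Hb el).
  have Hst : nxt a st e = nxt b st e by rewrite /nxt Hr (raise_eq _ HP).
  have e0 := gl_ge0 Ha.
  have I1 : Inv a (nxt b st e) by rewrite -Hst; apply: Inv_nxt.
  have I2 : Inv b (nxt b st e) by apply: Inv_nxt.
  have P2 : prevEq a b (nxt b st e).
    move=> i /=; rewrite !cnt_rcons; case: (eqVneq (rx b st.1 (s st.1)) i) => [<-|Hi].
      by rewrite addn1 /=.
    by rewrite addn0 HP.
  have Q2 : forall Q : 'I_n -> R, \sum_i Q i <= B ->
     (exists mu, 0 <= mu /\ prof a f (nxt b st e) mu = Q /\ prof b f (nxt b st e) mu = Q) -> cagree a b Q.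
    move=> Q HQB [mu [mu0 [Hqa Hqb]]]; apply: HQ => //.
    exists (mu + e); split; first lra.
    rewrite (@prof_S_ge a f st e (mu + e) Ha (ltac:(lra))).
    rewrite (@prof_S_ge b f st e (mu + e) Hb (ltac:(lra))).
    by rewrite addrK Hst.
  rewrite Hst; apply: IH => //; first lra.
  by rewrite -Hst -(@prof_S_ge a f st e l Ha el).
have agr : forall e, (gl a st = Some e \/ gl b st = Some e) ->
    (forall g, gl a st = Some g -> e <= g) -> (forall g, gl b st = Some g -> e <= g) ->
    e <= l -> cagree a b (raise a st e).
  move=> e Hab Hma Hmb el.
  have e0 : 0 <= e by case: Hab => /gl_ge0.
  have Ea : prof a f.+1 st e = raise a st e by apply: prof_end.
  have Eb : prof b f.+1 st e = raise a st e.
    by rewrite (raise_eq _ HP); apply: prof_end.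
  apply: HQ; last by exists e.
  rewrite -Ea; apply: le_trans HB; apply: ler_sum => i _.
  by case: (@prof_mono a f.+1 st e l i Ia e0 el).
case Ha: (gl a st) => [ga|]; case Hb: (gl b st) => [gb|].
- case: (leP gb ga) => Hab.
  + case: (leP gb l) => Hbl.
    * have Hc := agr gb (or_intror Hb) (fun g E => ltac:(move: E; rewrite Ha => -[<-]; exact: Hab))
        (fun g E => ltac:(move: E; rewrite Hb => -[<-]; exact: lexx)) Hbl.
      rewrite (raise_eq _ HP) in Hc.
      have [Ha' Hr Hp] := core Ia Ib HP Hb (fun g E => ltac:(move: E; rewrite Ha => -[<-]; exact: Hab)) Hc.
      by apply: (fin gb) => //; rewrite -Ha'.
    * rewrite /= Ha Hb (lt_le_trans Hbl Hab) Hbl; exact: raise_eq.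
  + case: (leP ga l) => Hal.
    * have Hc := agr ga (or_introl Ha) (fun g E => ltac:(move: E; rewrite Ha => -[<-]; exact: lexx))
        (fun g E => ltac:(move: E; rewrite Hb => -[<-]; exact: ltW Hab)) Hal.
      have Hc' : cagree b a (raise a st ga) by move=> i; rewrite Hc.
      have HP' : prevEq b a st by move=> i; rewrite HP.
      have [Hb' Hr Hp] := core Ib Ia HP' Ha (fun g E => ltac:(move: E; rewrite Hb => -[<-]; exact: ltW Hab)) Hc'.
      by apply: (fin ga) => //; rewrite ?Hr // -Hr Hp.
    * rewrite /= Ha Hb Hal (lt_trans Hal Hab); exact: raise_eq.
- case: (leP ga l) => Hal.
  + have Hc := agr ga (or_introl Ha) (fun g E => ltac:(move: E; rewrite Ha => -[<-]; exact: lexx))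
        (fun g E => ltac:(move: E; rewrite Hb => //)) Hal.
    have Hc' : cagree b a (raise a st ga) by move=> i; rewrite Hc.
    have HP' : prevEq b a st by move=> i; rewrite HP.
    have [Hb' _ _] := core Ib Ia HP' Ha (fun g E => ltac:(move: E; rewrite Hb => //)) Hc'.
    by rewrite Hb in Hb'.
  + rewrite /= Ha Hb Hal; exact: raise_eq.
- case: (leP gb l) => Hbl.
  + have Hc := agr gb (or_intror Hb) (fun g E => ltac:(move: E; rewrite Ha => //))
        (fun g E => ltac:(move: E; rewrite Hb => -[<-]; exact: lexx)) Hbl.
    rewrite (raise_eq _ HP) in Hc.
    have [Ha' _ _] := core Ia Ib HP Hb (fun g E => ltac:(move: E; rewrite Ha => //)) Hc.
    by rewrite Ha in Ha'.
  + rewrite /= Ha Hb Hbl; exact: raise_eq.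
- rewrite /= Ha Hb; exact: raise_eq.
Qed.

Definition st0 : state := ([::], fun _ => 0).
Lemma Inv0 x : Inv x st0.
Proof. by split => i /=; [rewrite lexx | move=> _; apply: pos_ge0]. Qed.

Definition Pf x l := prof x d st0 l.
Definition Cf x l := \sum_i Pf x l i.

Lemma Pf0 x : Pf x 0 = (fun _ => 0).
Proof. by rewrite /Pf prof_0 //; apply: Inv0. Qed.

Lemma Pf_mono x l1 l2 i : 0 <= l1 -> l1 <= l2 ->
  Pf x l1 i <= Pf x l2 i /\ Pf x l2 i <= Pf x l1 i + (l2 - l1).
Proof. by move=> H1 H2; apply: prof_mono => //; apply: Inv0. Qed.

Lemma Pf_ge0 x l i : 0 <= l -> 0 <= Pf x l i.
Proof.
move=> l0; have [H _] := Pf_mono x i (lexx 0) l0.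
by move: H; rewrite Pf0.
Qed.

Lemma Cf_mono x l1 l2 : 0 <= l1 -> l1 <= l2 -> Cf x l1 <= Cf x l2.
Proof. by move=> H1 H2; apply: ler_sum => i _; case: (Pf_mono x i H1 H2). Qed.

Lemma Cf_lip x l1 l2 : 0 <= l1 -> l1 <= l2 -> Cf x l2 <= Cf x l1 + n%:R * (l2 - l1).
Proof.
move=> H1 H2.
have -> : n%:R * (l2 - l1) = \sum_(i < n) (l2 - l1).
  by rewrite sumr_const card_ord mulr_natl.
rewrite /Cf -big_split /=.
by apply: ler_sum => i _; case: (Pf_mono x i H1 H2).
Qed.

Lemma Cf0 x : Cf x 0 = 0.
Proof. by rewrite /Cf Pf0 big1. Qed.

Lemma raise_big x st L : Inv x st -> 0 <= L -> L <= \sum_i raise x st L i.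
Proof.
move=> [I1 _] L0.
have c0 : forall i, 0 <= st.2 i by move=> i; apply: le_trans (I1 i); apply: prv_ge0.
have r0 : forall i, 0 <= raise x st L i by move=> i; apply: le_trans (raise_ge _ _ _ L0).
case: (boolP (s st.1 == finset.set0)) => HS.
  rewrite (bigD1 i0) //=.
  have : 0 <= \sum_(i | i != i0) raise x st L i by apply: sumr_ge0.
  by rewrite /raise HS eqxx; have := c0 i0; lra.
case/set0Pn: HS => j Hj.
rewrite (bigD1 j) //=.
have : 0 <= \sum_(i | i != j) raise x st L i by apply: sumr_ge0.
have : prv x j (count_mem j st.1) + L <= raise x st L j.
  rewrite /raise; case: ifP => [/eqP E|_]; first by rewrite E inE in Hj.
  by rewrite Hj; apply: mx_ge_r.
have := prv_ge0 x j (count_mem j st.1); lra.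
Qed.

Lemma prof_unb x f st t : Inv x st -> exists l, 0 <= l /\ t <= \sum_i prof x f st l i.
Proof.
elim: f st => [|f IH] st HI.
  exists (mx 0 t); split; first exact: mx_ge_l.
  apply: le_trans (raise_big HI (mx_ge_l _ _)); exact: mx_ge_r.
case Hg: (gl x st) => [g|].
  have [l [l0 Hl]] := IH _ (Inv_nxt HI Hg).
  have g0 := gl_ge0 Hg.
  exists (l + g); split; first lra.
  by rewrite (@prof_S_ge x f st g (l + g) Hg (ltac:(lra))) addrK.
exists (mx 0 t); split; first exact: mx_ge_l.
rewrite /= Hg; apply: le_trans (raise_big HI (mx_ge_l _ _)); exact: mx_ge_r.
Qed.

Lemma Cf_onto x t : 0 <= t -> exists l, 0 <= l /\ Cf x l = t.
Proof.
move=> t0; have [M [M0 HM]] := @prof_unb x d st0 t (Inv0 x).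
apply: (@ivt_lip _ (Cf x) n%:R M t) => //.
- by move=> a b; apply: Cf_mono.
- by move=> a b; apply: Cf_lip.
- by rewrite Cf0.
Qed.

Definition lam x t : R :=
  match pselect (exists l, 0 <= l /\ Cf x l = t) with
  | left H => proj1_sig (cid H) | right _ => 0 end.

Lemma lam_spec x t : 0 <= t -> 0 <= lam x t /\ Cf x (lam x t) = t.
Proof.
move=> t0; rewrite /lam; case: pselect => [H|H]; first exact: (proj2_sig (cid H)).
by case: H; apply: Cf_onto.
Qed.

Lemma Pf_wd x l1 l2 : 0 <= l1 -> 0 <= l2 -> Cf x l1 = Cf x l2 -> Pf x l1 = Pf x l2.
Proof.
wlog H12 : l1 l2 / l1 <= l2.
  move=> W H1 H2 E; case: (leP l1 l2) => H; first exact: W.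
  by apply/esym/W => //; apply: ltW.
move=> H1 H2 E; apply/funext => i.
have Hle : forall j, 0 <= Pf x l2 j - Pf x l1 j.
  by move=> j; case: (Pf_mono x j H1 H12) => ? _; lra.
have Hs : \sum_(j < n) (Pf x l2 j - Pf x l1 j) = 0.
  by rewrite sumrB -/(Cf x l2) -/(Cf x l1) E subrr.
have := @psumr_eq0P _ _ predT _ (fun j _ => Hle j) Hs i isT; lra.
Qed.

Definition Dstrat : astrat R n d := fun x t => Pf x (lam x t).

Lemma aobs_cnt x t i : 0 <= t -> 0 <= Dstrat x t i ->
  aobs Dstrat x t i = count (let_ (Dstrat x t i)) (sdep x i).
Proof.
move=> _ H; rewrite /aobs (count_sdep _ _ H); apply: eq_card => j; rewrite inE.
by apply/idP/idP; [move/set_mem | move=> ?; apply/mem_set].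
Qed.

Lemma Dstrat_ok k : astrat_ok k Dstrat.
Proof.
split; [|split; [|split]].
- move=> x i; rewrite /Dstrat.
  have [H1 H2] := lam_spec x (lexx 0).
  by rewrite (Pf_wd H1 (lexx 0)) ?Cf0 // Pf0.
- move=> x i t t' t0 tt' _; rewrite /Dstrat.
  have t'0 : 0 <= t' by apply: le_trans tt'.
  have [H1 H2] := lam_spec x t0; have [H1' H2'] := lam_spec x t'0.
  case: (leP (lam x t) (lam x t')) => Hl.
    by case: (Pf_mono x i H1 Hl).
  have := @Cf_mono x _ _ H1' (ltW Hl); rewrite H2 H2' => Ht.
  have -> : t = t' by apply/eqP; rewrite eq_le tt' Ht.
  exact: lexx.
- by move=> x t /andP [t0 _]; rewrite /Dstrat; case: (lam_spec x t0).
move=> x y t /andP [t0 tk] Hobs.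
have key : forall l, 0 <= l -> Cf x l <= t -> Pf x l = Pf y l.
  apply: (NA_gen (Inv0 x) (Inv0 y)) => //.
  move=> Q HQ [mu [mu0 [Hx Hy]]] i.
  have s0 : 0 <= \sum_i Q i by rewrite -Hx; apply: sumr_ge0 => j _; apply: Pf_ge0.
  have Dx : Dstrat x (\sum_i Q i) = Q.
    have [L1 L2] := lam_spec x s0.
    by rewrite /Dstrat (Pf_wd L1 mu0) //; rewrite L2 /Cf /Pf Hx.
  have Dy : Dstrat y (\sum_i Q i) = Q.
    have [L1 L2] := lam_spec y s0.
    by rewrite /Dstrat (Pf_wd L1 mu0) //; rewrite L2 /Cf /Pf Hy.
  have Q0 : 0 <= Q i by rewrite -Hx; apply: Pf_ge0.
  have := congr1 (fun f => f i) (Hobs (\sum_j Q j) (ltac:(by rewrite s0 HQ))).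
  rewrite !aobs_cnt ?Dx ?Dy //.
move=> t' /andP [t'0 t't]; rewrite /Dstrat.
have [L1 L2] := lam_spec x t'0; have [M1 M2] := lam_spec y t'0.
have E := key _ L1 (ltac:(by rewrite L2)).
rewrite E; apply: Pf_wd => //.
by rewrite M2 /Cf -E -/(Cf x (lam x t')) L2.
Qed.

Definition stepM x (o : option (seq 'I_n)) : option (seq 'I_n) :=
  obind (fun h => if [exists j in s h, m_avail (cx x) h j]
                  then Some (rcons h (rx x h (s h))) else None) o.

Lemma mplay_iter x m : mplay s (cx x) (rx x) m = iter m (stepM x) (Some [::]).
Proof. by elim: m => //= m ->. Qed.

Lemma iter_none x f : iter f (stepM x) None = None.
Proof. by elim: f => //= f ->. Qed.

Lemma sum_cnt (h : seq 'I_n) : (\sum_(i < n) count_mem i h)%N = size h.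
Proof.
elim: h => [|a h IH] /=; first by rewrite big1.
rewrite big_split /= IH (bigD1 a) //= eqxx big1 // => i /negbTE.
by rewrite eq_sym => ->.
Qed.

Lemma raise_cost x st g k : Inv x st -> 0 <= g -> (#|s st.1| <= k)%N ->
  s st.1 != finset.set0 ->
  \sum_i raise x st g i <= \sum_i st.2 i + k%:R * g.
Proof.
move=> [I1 _] g0 Hk HS.
apply: (@le_trans _ _ (\sum_i (st.2 i + (if i \in s st.1 then g else 0)))).
  apply: ler_sum => i _; rewrite /raise (negbTE HS); case: ifP => _; last by lra.
  by apply: mx_le; have := I1 i; lra.
rewrite big_split /= -big_mkcond /= sumr_const lerD2l -[g *+ _]mulr_natl.
by apply: ler_wpM2r => //; rewrite ler_nat.
Qed.

Lemma win_gen x k f st : Inv x st -> (forall i, count_mem i st.1 <= cx x i)%N ->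
  iter f (stepM x) (Some st.1) != None -> (forall h, #|s h| <= k)%N ->
  exists L, 0 <= L /\ exists hf : seq 'I_n,
   [/\ (forall i, prv x i (count_mem i hf) <= prof x f st L i),
       \sum_i prof x f st L i <= \sum_i st.2 i + k%:R * L,
       L = \sum_i (prv x i (count_mem i hf) - prv x i (count_mem i st.1)),
       size hf = (size st.1 + f)%N & (forall i, count_mem i hf <= cx x i)%N].
Proof.
move=> + + + Hk; elim: f st => [|f IH] st HI Hc Hit.
  exists 0; split; first exact: lexx.
  exists st.1; split => //=.
  - by move=> i; rewrite raise0 //; case: HI.
  - by rewrite raise0 // mulr0 addr0.
  - by rewrite big1 // => i _; rewrite subrr.
  - by rewrite addn0.
move: Hit; rewrite iterSr /= /stepM /=.
case: ifP => Hex; last by rewrite iter_none.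
move=> Hit.
set r := rx x st.1 (s st.1).
have Hg : gl x st = Some (gap x st.1 r) by rewrite /gl Hex.
set g := gap x st.1 r in Hg.
have g0 := gl_ge0 Hg.
have [Hr HS _] := gl_some Hg.
have Hra : av x st.1 r by move: Hr; rewrite inMset => /and3P [].
have HI' := Inv_nxt HI Hg.
have Hc' : forall i, (count_mem i (nxt x st g).1 <= cx x i)%N.
  move=> i /=; rewrite cnt_rcons; case: (eqVneq r i) => [<-|Hi].
    by rewrite addn1.
  by rewrite addn0.
have [L' [L0 [hf [H1 H2 H3 H4 H5]]]] := IH _ HI' Hc' Hit.
exists (L' + g); split; first lra.
exists hf; rewrite Hg.
have -> : (L' + g < g) = false by apply/negbTE; rewrite -leNgt; lra.
rewrite addrK.
split => //.
- apply: le_trans H2 _.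
  have := @raise_cost x st g k HI g0 (Hk st.1) HS.
  rewrite /=; lra.
- have E : \sum_i (prv x i (count_mem i (nxt x st g).1) - prv x i (count_mem i st.1)) = g.
    rewrite (bigD1 r) //= big1 => [|i Hi].
      by rewrite cnt_rcons eqxx addn1 /= addr0.
    by rewrite cnt_rcons eq_sym (negbTE Hi) addn0 subrr.
  rewrite H3 -E -big_split /=; apply: eq_bigr => i _; lra.
- by rewrite H4 size_rcons addnS.
Qed.

Lemma Dwin x (hh : 'I_n -> R) k : ahider_ok hh x -> mstrat_ok k s ->
  mwins d s (cx x) (rx x) -> awins k Dstrat x.
Proof.
case=> [Hh0 [Hsum Hx]] Hk Hw.
have Hit : iter d (stepM x) (Some [::]) != None by rewrite -mplay_iter.
have [L [L0 [hf [H1 H2 H3 H4 H5]]]] :=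
  @win_gen x k d st0 (Inv0 x) (fun i => leq0n _) Hit Hk.
have Hce : forall i, count_mem i hf = cx x i.
  have Hs : (\sum_i count_mem i hf = \sum_i cx x i)%N by rewrite sum_cnt H4 sum_cx.
  have : (\sum_i (cx x i - count_mem i hf) == 0)%N.
    by rewrite (sumnB _ (fun i _ => H5 i)) Hs subnn.
  rewrite sum_nat_eq0 => /forallP Hf i.
  apply/eqP; rewrite eqn_leq H5 /= -subn_eq0; exact: (Hf i).
have Hmem : forall j, cl (x j).2 \in sdep x (x j).1.
  move=> j; rewrite mem_sort; apply: map_f; rewrite mem_filter eqxx /=.
  exact: mem_enum.
have Hprv : forall i, prv x i (cx x i) <= hh i.
  move=> i; case Hc: (cx x i) => [|c] /=; first exact: Hh0.
  have : (c < size (sdep x i))%N by rewrite size_sdep Hc.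
  rewrite /pos; move=> /(mem_nth 0); rewrite mem_sort => /mapP [j]; rewrite mem_filter => /andP [/eqP Ej _] ->.
  have /andP [A B] := Hx j; rewrite cl_le; [by rewrite -Ej | exact: Hh0].
have HL : L <= 1.
  rewrite H3 /=; apply: le_trans Hsum; apply: ler_sum => i _.
  by rewrite subr0 Hce.
have HC : Cf x L <= k%:R.
  move: H2; rewrite /= sumr_const mul0rn add0r => H2; apply: le_trans H2 _.
  by rewrite -[X in _ <= X]mulr1; apply: ler_wpM2l.
have k0 : 0 <= (k%:R : R) by [].
have [M0 M1] := lam_spec x k0.
have Hge : forall i, Pf x L i <= Dstrat x k%:R i.
  move=> i; rewrite /Dstrat; case: (leP L (lam x k%:R)) => Hl.
    by case: (Pf_mono x i L0 Hl).
  have := @Cf_mono x _ _ M0 (ltW Hl); rewrite M1 => HC'.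
  have E : Pf x L = Pf x (lam x k%:R).
    by apply: Pf_wd => //; rewrite M1; apply/eqP; rewrite eq_le HC HC'.
  by rewrite E lexx.
apply/forallP => j.
set i := (x j).1.
have Hm := Hmem j.
case Hc: (cx x i) => [|c].
  by move: Hm; rewrite -/i; have := size_sdep x i; rewrite Hc => /size0nil ->.
have Hall : all (let_ (pos x i c)) (sdep x i).
  rewrite all_count eqn_leq count_size /= size_sdep Hc.
  by rewrite cnt_pos Hc ltnSn lexx.
have := allP Hall _ Hm; rewrite /let_ => Hj.
apply: le_trans (ge_cl _) _; apply: le_trans Hj _.
apply: le_trans (Hge i).
have := H1 i; rewrite Hce Hc /=; exact.
Qed.
End Strat.

Section Final.
Variable R : realType.
Local Open Scope classical_set_scope.

Lemma wsum_bounds (T : Type) (ok : T -> Prop) (mu : seq (R * T)) (b : T -> bool) :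
  foldr (fun p P => (0 <= p.1 /\ ok p.2) /\ P) True mu ->
  0 <= \sum_(p <- mu) p.1 * (b p.2)%:R /\
  \sum_(p <- mu) p.1 * (b p.2)%:R <= \sum_(p <- mu) p.1.
Proof.
elim: mu => [|p mu IH] /=; first by rewrite !big_nil lexx.
move=> [[p0 _] /IH [A B]]; rewrite !big_cons.
have C : 0 <= (b p.2)%:R :> R by case: (b p.2).
have D : (b p.2)%:R <= 1 :> R by case: (b p.2); rewrite /= ?lexx ?ler01.
have E : 0 <= p.1 * (b p.2)%:R by apply: mulr_ge0.
have F : p.1 * (b p.2)%:R <= p.1 by rewrite -[leRHS]mulr1; apply: ler_wpM2l.
split; lra.
Qed.

Variables (n d k : nat) (i0 : 'I_n).

Definition conv (mu : seq (R * mstrat n)) : seq (R * astrat R n d) :=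
  [seq (p.1, @Dstrat R n d i0 p.2) | p <- mu].

Lemma conv_ok mu : mix_ok (@mstrat_ok n k) mu -> mix_ok (@astrat_ok R n d k) (conv mu).
Proof.
case=> H1 H2; split; last by rewrite /conv big_map.
elim: mu H1 {H2} => [|p mu IH] //= [[p0 _] H]; split; last exact: IH.
by split => //; apply: Dstrat_ok.
Qed.

Lemma conv_win mu x hh : foldr (fun p P => (0 <= p.1 /\ @mstrat_ok n k p.2) /\ P) True mu ->
  ahider_ok hh x -> mwinprob d mu (cx x) (rx i0 x) <= awinprob k (conv mu) x.
Proof.
move=> + Hx; rewrite /mwinprob /awinprob /conv big_map.
elim: mu => [|p mu IH] /=; first by rewrite !big_nil.
move=> [[p0 Hp] H]; rewrite !big_cons /=.
apply: lerD; last exact: IH.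
apply: ler_wpM2l => //.
case Hw: (mwins d p.2 (cx x) (rx i0 x)) => /=; last by case: (awins _ _ _).
by rewrite (Dwin Hx Hp Hw).
Qed.

End Final.

Local Open Scope classical_set_scope.
Unset Implicit Arguments.

Theorem mainTheorem3 (R : realType) (n d k : nat) :
  (0 < n)%N -> (0 < d)%N -> (0 < k)%N ->
  v_M R n d k <= v_A R n d k.
Proof.
move=> n0 _ _; pose i0 : 'I_n := Ordinal n0.
pose hA : 'I_n -> R := fun i => (i == i0)%:R.
pose xA : acfg R n d := fun _ => (i0, 0).
have HA : ahider_ok hA xA.
  split; first by move=> i; rewrite /hA; case: (i == i0).
  split; last first.
    by move=> j; rewrite /xA /hA /= lexx ler01.
  rewrite (bigD1 i0) //= big1 ?addr0 /hA ?eqxx // => i /negbTE ->; by [].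
pose IA (mu : seq (R * astrat R n d)) :=
  [set w : R | exists (h : 'I_n -> R) (x : acfg R n d), ahider_ok h x /\ w = awinprob k mu x].
pose IM (mu : seq (R * mstrat n)) :=
  [set w : R | exists (c : mplacement n) (r : mresp n), mhider_ok d c r /\ w = mwinprob d mu c r].
have IA_ne : forall mu, (IA mu) !=set0 by move=> mu; exists (awinprob k mu xA); exists hA, xA.
have IA_lb : forall mu, mix_ok (@astrat_ok R n d k) mu -> has_lbound (IA mu).
  move=> mu [H1 _]; exists 0 => w [h [x [_ ->]]].
  by case: (wsum_bounds (fun D => awins k D x) H1).
have IM_lb : forall mu, mix_ok (@mstrat_ok n k) mu -> has_lbound (IM mu).
  move=> mu [H1 _]; exists 0 => w [c [r [_ ->]]].
  by case: (wsum_bounds (fun S => mwins d S c r) H1).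
pose SA := [set v : R | exists mu, mix_ok (@astrat_ok R n d k) mu /\ v = inf (IA mu)].
pose SM := [set v : R | exists mu, mix_ok (@mstrat_ok n k) mu /\ v = inf (IM mu)].
have SA_ub : has_ubound SA.
  exists 1 => v [mu [Hmu ->]].
  apply: le_trans (ge_inf (IA_lb mu Hmu) (ltac:(by exists hA, xA))) _.
  case: Hmu => H1 H2; rewrite -H2.
  by case: (wsum_bounds (fun D => awins k D xA) H1).
have SM_ne : SM !=set0.
  pose s0 : mstrat n := fun _ => finset.set0.
  have Hm : mix_ok (@mstrat_ok n k) [:: (1, s0)].
    split; last by rewrite big_cons big_nil addr0.
    by split => //; split; [exact: ler01 | move=> h; rewrite /s0 cards0].
  by exists (inf (IM [:: (1, s0)])); exists [:: (1, s0)].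
apply: ge_sup => // v [mu [Hmu ->]].
have Hmu' := conv_ok d i0 Hmu.
apply: le_trans (ub_le_sup SA_ub (ltac:(by exists (conv d i0 mu)))).
apply: lb_le_inf => // w [h [x [Hx ->]]].
apply: le_trans (conv_win i0 (proj1 Hmu) Hx).
apply: (ge_inf (IM_lb mu Hmu)).
by exists (cx x), (rx i0 x); split => //; apply: rx_hider.
Qed.
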